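(* Let $\mathbf{k}$ be a field, $n\ge 1$, $N\ge 2$, and let $P_1,\dots,P_N\in\mathbf{k}^n$ be pairwise distinct points. In the point trie $T$ of the ordered list $[P_1,\dots,P_N]$, let $h\in\{1,\dots,n\}$ be the smallest level such that the node $v$ at level $h$ whose label contains $N$ has label exactly $\{N\}$. Then the parent of $v$ has at least one child other than $v$; let $w$ be the child of the parent of $v$ lying immediately to the left of $v$ (in the left-to-right order of children), and let $i_1$ be the smallest element of the label of $w$. Then: (1) $h$ equals the $\sigma$-value $\sigma(P_N,\{P_1,\dots,P_{N-1}\})$; (2) $P_{i_1}$ is the $\sigma$-antecedent of $P_N$, i.e. $i_1$ is the maximal index $m\in\{1,\dots,N-1\}$ such that $\pi_{h-1}(P_m)=\pi_{h-1}(P_N)$ and the exponents of $x_{h+1},\dots,x_n$ in the term $\Phi(P_m)$ are all zero, where $\Phi$ is the Cerlienco–Mureddu correspondence of $[P_1,\dots,P_{N-1}]$.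
   Context: Write $P_i=(a_{1,i},\dots,a_{n,i})$. For $0\le m\le n$, $\pi_m:\mathbf{k}^n\to\mathbf{k}^m$ is the projection onto the first $m$ coordinates ($\pi_0$ maps everything to the empty tuple), and for terms $\pi^m(x_1^{\gamma_1}\cdots x_n^{\gamma_n})$ denotes the exponent tuple $(\gamma_m,\dots,\gamma_n)$. Terms are monomials in $\mathbf{k}[x_1,\dots,x_n]$, ordered lexicographically with $x_1<\dots<x_n$. Point trie of an ordered list $[P_1,\dots,P_N]$ of distinct points: a rooted tree with levels $0,\dots,n$. For each $j$ and each value $c\in\pi_j(\{P_1,\dots,P_N\})$ there is exactly one node at level $j$, whose label is the set $\{i:\pi_j(P_i)=c\}$ (so the root has label $\{1,\dots,N\}$ and each leaf has a singleton label). A node at level $j\ge1$ with value $c$ is a child of the node at level $j-1$ with value obtained by dropping the last coordinate of $c$, and the edge between them is labelled by that last coordinate. The children of each node are ordered from left to right by increasing smallest element of their labels (equivalently, in the order in which they are created when the points are inserted one by one in the order $P_1,P_2,\dots$). $\sigma$-value: for a finite set $\mathbf{X}$ of points and $P\notin\mathbf{X}$, $\sigma(P,\mathbf{X})$ is the maximal $s\in\{1,\dots,n\}$ such that some $Q\in\mathbf{X}$ satisfies $\pi_{s-1}(Q)=\pi_{s-1}(P)$. Cerlienco–Mureddu correspondence $\Phi$ of an ordered list $[P_1,\dots,P_M]$ of distinct points of $\mathbf{k}^n$ (defined recursively on $M$ and on $n$; write $\Phi(P_i)=x_1^{\alpha^{(i)}_1}\cdots x_n^{\alpha^{(i)}_n}$):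 $\Phi(P_1)=1$. For $M>1$, assuming $\alpha^{(1)},\dots,\alpha^{(M-1)}$ known (these are the values of the correspondence of $[P_1,\dots,P_{M-1}]$), let $s=\sigma(P_M,\{P_1,\dots,P_{M-1}\})$; let the $\sigma$-antecedent $P_l$ be the point with maximal index $l\le M-1$ such that $\pi_{s-1}(P_l)=\pi_{s-1}(P_M)$ and $\alpha^{(l)}_{s+1}=\dots=\alpha^{(l)}_n=0$. Set $\alpha^{(M)}_j=0$ for $j>s$ and $\alpha^{(M)}_s=\alpha^{(l)}_s+1$. Then let $Y$ be the ordered list (in the order of indices) of the projections $\pi_{s-1}(P_i)$ of the points $P_i$, $1\le i\le M$, with $(\alpha^{(i)}_s,\dots,\alpha^{(i)}_n)=(\alpha^{(M)}_s,0,\dots,0)$; apply the Cerlienco–Mureddu correspondence in $\mathbf{k}^{s-1}$ to $Y$ and set $(\alpha^{(M)}_1,\dots,\alpha^{(M)}_{s-1})$ equal to the exponent vector of its value at $\pi_{s-1}(P_M)$. The image of $\Phi$ is the lexicographic Gröbner escalier of the vanishing ideal of the points. *)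

(* Defs.v *)
From HB Require Import structures.
From mathcomp Require Import all_boot all_algebra.
Set Implicit Arguments. Unset Strict Implicit. Unset Printing Implicit Defensive.

(* Points of k^n are n-tuples; pi_j(Q) = take j Q (first j coordinates).
   Points are indexed 1..N by a function P : nat -> n.-tuple K
   (values outside 1..N are irrelevant). *)

Section Defs.
Variable K : eqType.

(* A node of the trie is a pair (level j, value c) with c in pi_j({P_1..P_N}). *)
Definition trie_node (n N : nat) (P : nat -> n.-tuple K) (x : nat * seq K) : bool :=
  (x.1 <= n) && (x.2 \in [seq take x.1 (tval (P i)) | i <- iota 1 N]).

Definition trie_label (n N : nat) (P : nat -> n.-tuple K) (x : nat * seq K) : seq nat :=
  [seq i <- iota 1 N | take x.1 (tval (P i)) == x.2].

Definition trie_minlab (n N : nat) (P : nat -> n.-tuple K) (x : nat * seq K) : nat :=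
  head 0 (trie_label N P x).

Definition trie_parent (x : nat * seq K) : nat * seq K :=
  (x.1.-1, take x.1.-1 x.2).

Definition trie_child (n N : nat) (P : nat -> n.-tuple K) (x y : nat * seq K) : bool :=
  [&& trie_node N P x, trie_node N P y, y.1 == x.1.+1 & trie_parent y == x].

(* w is the child of u lying immediately to the left of the child v
   (children ordered left to right by increasing smallest label element) *)
Definition trie_left_neighbour (n N : nat) (P : nat -> n.-tuple K) (u v w : nat * seq K) : Prop :=
  [/\ trie_child N P u w, trie_child N P u v, trie_minlab N P w < trie_minlab N P v &
      forall x, trie_child N P u x ->
        ~~ ((trie_minlab N P w < trie_minlab N P x) && (trie_minlab N P x < trie_minlab N P v))].

Definition sigma_val (m : nat) (X : seq (seq K)) (Q : seq K) : nat :=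
  \max_(s <- iota 0 m.+1 | (0 < s) && has (fun R => take s.-1 R == take s.-1 Q) X) s.

(* cm_aux fuel m pts returns the list of exponent vectors
   (alpha_1, ..., alpha_m) (as seq nat) of Phi(P_1), ..., Phi(P_M) for the ordered
   list pts = [P_1; ...; P_M] of points of k^m.  The fuel m + M + 1 is
   sufficient (each recursive call decreases dimension + length). *)
Fixpoint cm_aux (fuel m : nat) (pts : seq (seq K)) : seq (seq nat) :=
  match fuel with
  | 0 => [::]
  | fuel'.+1 =>
    let M := size pts in
    if M <= 1 then nseq M (nseq m 0) else
    let PM := last [::] pts in
    let prev := take M.-1 pts in
    let A := cm_aux fuel' m prev in
    let s := sigma_val m prev PM in
    (* sigma-antecedent, 0-based index l < M-1 *)
    let l := \max_(l <- iota 0 M.-1 |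
               (take s.-1 (nth [::] prev l) == take s.-1 PM)
               && all (fun e => e == 0) (drop s (nth [::] A l))) l in
    let a := (nth 0 (nth [::] A l) s.-1).+1 in
    let top := a :: nseq (m - s) 0 in
    (* Y: projections pi_{s-1}(P_i), i = 1..M, with (alpha^(i)_s..alpha^(i)_m) = top;
       for i = M this holds by construction *)
    let Y := [seq take s.-1 (nth [::] pts i) |
               i <- iota 0 M & (i == M.-1) || (drop s.-1 (nth [::] A i) == top)] in
    let B := cm_aux fuel' s.-1 Y in
    rcons A (last [::] B ++ top)
  end.

Definition cm (m : nat) (pts : seq (seq K)) : seq (seq nat) :=
  cm_aux (m + size pts).+1 m pts.

End Defs.

(* Main.v *)
Require Import Defs.
From HB Require Import structures.
From mathcomp Require Import all_boot all_algebra.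
From mathcomp Require Import zify.
Set Implicit Arguments. Unset Strict Implicit. Unset Printing Implicit Defensive.

Definition all0 (v : seq nat) := all (fun e => e == 0) v.
Definition axis (v : seq nat) := all0 (drop 1 v).

Lemma sig_le (K : eqType) d (X : seq (seq K)) Q k :
  (forall s, 0 < s <= d -> has (fun R => take s.-1 R == take s.-1 Q) X -> s <= k) ->
  sigma_val d X Q <= k.
Proof.
move=> H; rewrite /sigma_val; apply/bigmax_leqP_seq => s; rewrite mem_iota add0n ltnS.
by move=> sd /andP[s0 hs]; apply: H => //; rewrite s0.
Qed.

Lemma sig_ge (K : eqType) d (X : seq (seq K)) Q s :
  0 < s <= d -> has (fun R => take s.-1 R == take s.-1 Q) X -> s <= sigma_val d X Q.
Proof.
move=> /andP[s0 sd] hs; rewrite /sigma_val.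
apply: (leq_bigmax_seq (F := id) s); first by rewrite mem_iota add0n ltnS.
by rewrite s0.
Qed.

Lemma sig_bounds (K : eqType) d (X : seq (seq K)) Q :
  0 < d -> X != [::] -> 0 < sigma_val d X Q <= d.
Proof.
move=> d0 X0; rewrite (sig_ge (s := 1)) ?d0 //=; last first.
  by case: X X0 => //= R X _; rewrite !take0 eqxx.
by apply: sig_le => s /andP[].
Qed.

Lemma bigmax_attained (r : seq nat) (p : pred nat) :
  has p r -> p (\max_(i <- r | p i) i) && ((\max_(i <- r | p i) i) \in r).
Proof.
elim: r => //= x r IH; rewrite big_cons; case: (boolP (p x)) => px /= H.
  case: (boolP (has p r)) => hr.
    have /andP[pm mr] := IH hr.
    rewrite /maxn; case: ifP => _; first by rewrite pm inE mr orbT.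
    by rewrite px inE eqxx.
  by rewrite big_hasC // maxn0 px inE eqxx.
have /andP[pm mr] := IH H.
by rewrite pm inE mr orbT.
Qed.

Definition cm_inv (d : nat) (sz : nat) (A : seq (seq nat)) :=
  [/\ size A = sz, all (fun v => size v == d) A, (0 < size A -> nth [::] A 0 = nseq d 0) &
     forall i j, i < j < size A -> axis (nth [::] A i) -> axis (nth [::] A j) ->
       nth 0 (nth [::] A i) 0 < nth 0 (nth [::] A j) 0].

Lemma cm_step_gen (K : eqType) fuel :
  (forall d (pts : seq (seq K)), 0 < d -> d + size pts < fuel -> cm_inv d (size pts) (cm_aux fuel d pts)) ->
  forall d (pts : seq (seq K)), 0 < d -> 1 < size pts -> d + size pts < fuel.+1 ->
  let A := cm_aux fuel d (take (size pts).-1 pts) in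
  let s := sigma_val d (take (size pts).-1 pts) (last [::] pts) in
  exists lB a, [/\ cm_aux fuel.+1 d pts = rcons A (lB ++ a :: nseq (d - s) 0),
     size lB = s.-1, 0 < a, 0 < s <= d &
     (s = 1 -> lB = [::] /\ forall i, i < size A -> axis (nth [::] A i) -> nth 0 (nth [::] A i) 0 < a)].
Proof.
move=> IH d pts d0 M2 fu A s.
rewrite [cm_aux fuel.+1 d pts]/= leqNgt M2 /=.
rewrite -/A -/s.
set l := \max_(l <- _ | _) l.
set Y := [seq _ | i <- _ & _].
have szp : size (take (size pts).-1 pts) = (size pts).-1 by rewrite size_takel // leq_pred.
have [szA allA A0 incA] : cm_inv d (size (take (size pts).-1 pts)) A by apply: IH => //; rewrite szp; lia.
have /andP[s0 sd] : 0 < s <= d by apply: sig_bounds => //; rewrite -size_eq0 szp; lia.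
set a := (nth 0 (nth [::] A l) s.-1).+1.
have key : s = 1 -> forall i, i < size A -> axis (nth [::] A i) -> nth 0 (nth [::] A i) 0 < a.
  move=> s1 i iA ax.
  have p0 : has (fun l => (take s.-1 (nth [::] (take (size pts).-1 pts) l) == take s.-1 (last [::] pts))
               && all (fun e => e == 0) (drop s (nth [::] A l))) (iota 0 (size pts).-1).
    apply/hasP; exists 0; first by rewrite mem_iota; lia.
    rewrite s1 !take0 eqxx /= A0; last by rewrite szA szp; lia.
    by apply/allP => e /mem_drop /nseqP [-> _].
  have /andP[pl lin] := bigmax_attained p0.
  rewrite -/l in pl lin.
  have il : i <= l.
    apply: (leq_bigmax_seq (F := id) i); first by rewrite mem_iota; rewrite szA szp in iA; lia.
    by rewrite s1 !take0 eqxx.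
  rewrite /a s1 /=; rewrite leq_eqVlt in il; case/orP: il => [/eqP -> //|il].
  apply: ltnW; apply: incA => //; first by rewrite il /=; move: lin; rewrite szA szp mem_iota; lia.
  by move: pl; rewrite s1 /= !take0 eqxx.
have f0 : 0 < fuel by lia.
have hB : s = 1 -> last [::] (cm_aux fuel s.-1 Y) = [::].
  move=> s1.
  have -> : Y = [:: [::]].
    rewrite /Y -/a s1.
    have E : size pts = (size pts).-1.+1 by rewrite prednK // ltnW.
    have -> : iota 0 (size pts) = iota 0 (size pts).-1 ++ [:: (size pts).-1] by rewrite {1}E -addn1 iotaD.
    rewrite filter_cat /= eqxx /=.
    have -> : [seq i <- iota 0 (size pts).-1 | (i == (size pts).-1) || (drop 0 (nth [::] A i) == a :: nseq (d - 1) 0)] = [::].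
      apply/eqP; rewrite -[_ == _]negbK -has_filter; apply/hasPn => i; rewrite mem_iota /= => ilt.
      rewrite drop0 negb_or; apply/andP; split; first by rewrite neq_ltn; apply/orP; left; lia.
      apply/eqP => Ai.
      have H := key s1 i; rewrite Ai /= ltnn in H; suff: false by [].
      apply: H; first by rewrite szA szp; lia.
      by rewrite /axis /all0 /= drop0; apply/allP => e /nseqP [-> _].
    by rewrite /= take0.
  by rewrite s1 -(prednK f0).
exists (last [::] (cm_aux fuel s.-1 Y)), a; split => //; last first.
- by move=> s1; split; [exact: hB | exact: key].
- by rewrite s0 sd.
have [s1|s2] : s = 1 \/ 1 < s by lia.
  by rewrite hB // s1.
have szY : 0 < size Y <= size pts.
  rewrite /Y size_map size_filter -has_count; apply/andP; split.
    by apply/hasP; exists (size pts).-1; rewrite ?eqxx // mem_iota; lia.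
  by rewrite -[X in _ <= X](size_iota 0) count_size.
have [szB allB _ _] := IH s.-1 Y (ltac:(lia)) (ltac:(lia)).
case E: (cm_aux fuel s.-1 Y) szB allB => [|b B']; first by move=> /= h0; lia.
by move=> _ /allP H; apply/eqP/H; rewrite /= mem_last.
Qed.

Lemma cm_inv_all (K : eqType) fuel : forall d (pts : seq (seq K)), 0 < d ->
  d + size pts < fuel -> cm_inv d (size pts) (cm_aux fuel d pts).
Proof.
elim: fuel => [|f IH] d pts d0 fu; first by lia.
case: (leqP (size pts) 1) => M1.
  rewrite /= M1; split.
  - by rewrite size_nseq.
  - by apply/allP => v /nseqP [-> _]; rewrite size_nseq.
  - by rewrite size_nseq nth_nseq => ->.
  - by move=> i j; rewrite size_nseq; lia.
have [lB [a [E szl a0 /andP[s0 sd] S1]]] := cm_step_gen IH d0 M1 fu.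
have szp : size (take (size pts).-1 pts) = (size pts).-1 by rewrite size_takel // leq_pred.
have [szA allA A0 incA] := IH d (take (size pts).-1 pts) d0 (ltac:(rewrite szp; lia)).
rewrite E; split.
- by rewrite size_rcons szA szp; lia.
- by rewrite all_rcons allA size_cat szl /= size_nseq andbT; apply/eqP; lia.
- by rewrite nth_rcons szA szp ifT ?A0 ?szA ?szp //; lia.
move=> i j; rewrite size_rcons !nth_rcons => /andP[ij jA].
have iA : i < size (cm_aux f d (take (size pts).-1 pts)) by lia.
rewrite iA; case: (ltnP j (size (cm_aux f d (take (size pts).-1 pts)))) => jA'.
  by apply: incA; rewrite ij.
have -> : j == size (cm_aux f d (take (size pts).-1 pts)) by apply/eqP; lia.
move=> axi axn.
have s1 : sigma_val d (take (size pts).-1 pts) (last [::] pts) = 1.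
  apply/eqP; rewrite eqn_leq s0 andbT leqNgt; apply/negP => s2.
  move: axn; rewrite /axis /all0.
  case: lB szl {E S1} => [|b lB] /=; first by lia.
  move=> _; rewrite drop0 all_cat /= => /andP[_ /andP[/eqP a00 _]]; lia.
have [-> H] := S1 s1.
exact: H.
Qed.

Lemma cm_nth (K : eqType) fuel : forall d (pts : seq (seq K)) i h, 0 < d ->
  d + size pts < fuel -> i < size pts ->
  all0 (drop h (nth [::] (cm_aux fuel d pts) i)) =
  (i == 0) || (sigma_val d (take i pts) (nth [::] pts i) <= h).
Proof.
elim: fuel => [|f IH] d pts i h d0 fu ip; first by lia.
case: (leqP (size pts) 1) => M1.
  have -> : i = 0 by lia.
  rewrite /= M1 nth_nseq ifT; last by lia.
  by rewrite /all0; apply/allP => e /mem_drop /nseqP [-> _].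
have [lB [a [E szl a0 /andP[s0 sd] _]]] :=
  cm_step_gen (fun d' pts' => @cm_inv_all K f d' pts') d0 M1 fu.
have szp : size (take (size pts).-1 pts) = (size pts).-1 by rewrite size_takel // leq_pred.
have [szA _ _ _] := cm_inv_all d0 (ltac:(rewrite szp; lia) : d + size (take (size pts).-1 pts) < f).
rewrite E nth_rcons szA szp.
case: ltnP => iA.
  rewrite IH //; last by rewrite szp.
    by rewrite take_takel ?nth_take //; lia.
  by rewrite szp; lia.
rewrite ifT; last by apply/eqP; lia.
have -> : i = (size pts).-1 by lia.
rewrite nth_last.
have -> : ((size pts).-1 == 0) = false by apply/eqP; lia.
rewrite /= /all0 drop_cat szl.
set s := sigma_val _ _ _ in szl s0 sd *.
case: ifP => hs.
  rewrite all_cat /=.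
  have -> : (a == 0) = false by apply/eqP; lia.
  rewrite andbF; symmetry; apply/negbTE; rewrite -ltnNge; lia.
case E2: (h - s.-1) => [|k] /=.
  have -> : (a == 0) = false by apply/eqP; lia.
  symmetry; apply/negbTE; rewrite -ltnNge; lia.
have -> : s <= h by lia.
by apply/allP => e /mem_drop /nseqP [-> _].
Qed.

Lemma head_filter_iota (p : pred nat) a k j : a <= j < a + k -> p j -> head 0 (filter p (iota a k)) <= j.
Proof.
elim: k a => [|k IH] a; first by lia.
move=> jr pj /=; case: ifP => pa /=; first by lia.
apply: IH => //; have : j != a by apply/eqP => e; rewrite -e pj in pa.
lia.
Qed.

Lemma head_filter_mem (p : pred nat) s : has p s -> head 0 (filter p s) \in filter p s.
Proof. by rewrite has_filter; case: (filter p s) => //= x r _; rewrite inE eqxx. Qed.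

Lemma sig_le_h (K : eqType) n (X : seq (seq K)) Q h : h <= n ->
  (forall R, R \in X -> take h R = take h Q -> h < n) ->
  (sigma_val n X Q <= h) = ~~ has (fun R => take h R == take h Q) X.
Proof.
move=> hn H; apply/idP/idP.
- move=> sh; apply/hasPn => R RX; apply/negP => /eqP e.
  have hn' := H R RX e.
  have : h.+1 <= sigma_val n X Q.
    apply: sig_ge; first by lia.
    by apply/hasP; exists R => //=; rewrite e.
  lia.
- move=> /hasPn nh; apply: sig_le => s /andP[s0 sn] /hasP [R RX /eqP e].
  rewrite leqNgt; apply/negP => hs.
  have := nh R RX; rewrite -(@take_takel _ h s.-1 R) ?e ?take_takel ?eqxx //; lia.
Qed.

Unset Implicit Arguments.

Theorem mainTheorem1 (K : fieldType) (n N : nat) (P : nat -> n.-tuple K) (h : nat) :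
  1 <= n -> 2 <= N ->
  (forall i j, 1 <= i <= N -> 1 <= j <= N -> P i = P j -> i = j) ->
  (* h is the smallest level in {1..n} whose node containing N has label {N} *)
  1 <= h <= n ->
  trie_label N P (h, take h (tval (P N))) = [:: N] ->
  (forall h', 1 <= h' < h -> trie_label N P (h', take h' (tval (P N))) != [:: N]) ->
  let v := (h, take h (tval (P N))) in
  let prev := [seq tval (P i) | i <- iota 1 N.-1] in
  let Phi := cm n prev in
  (exists x, trie_child N P (trie_parent v) x /\ x != v) /\
  (forall w, trie_left_neighbour N P (trie_parent v) v w ->
     let i1 := trie_minlab N P w in
     (* (1) *)
     h = sigma_val n prev (tval (P N)) /\
     (* (2) *)
     [/\ 1 <= i1 <= N.-1,
         take h.-1 (tval (P i1)) = take h.-1 (tval (P N)),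
         all (fun e => e == 0) (drop h (nth [::] Phi i1.-1)) &
         forall m, 1 <= m <= N.-1 ->
           take h.-1 (tval (P m)) = take h.-1 (tval (P N)) ->
           all (fun e => e == 0) (drop h (nth [::] Phi m.-1)) -> m <= i1]).
Proof.
move=> n1 N2 Pinj /andP[h1 hn] labv labmin v prev Phi.
have memlab : forall (x : nat * seq K) j,
    (j \in trie_label N P x) = (1 <= j <= N) && (take x.1 (P j) == x.2).
  by move=> x j; rewrite /trie_label mem_filter mem_iota andbC add1n ltnS.
have FN : forall j, 1 <= j <= N -> take h (P j) = take h (P N) -> j = N.
  move=> j jr e; have : j \in trie_label N P v by rewrite memlab jr /= e eqxx.
  by rewrite labv inE => /eqP.
have iotaN : iota 1 N = iota 1 N.-1 ++ [:: N].
  by rewrite -{1}(prednK (ltnW N2)) -[N.-1.+1]addn1 iotaD add1n prednK // ltnW.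
have [i0 [i0r i0e]] : exists i, 1 <= i <= N.-1 /\ take h.-1 (P i) = take h.-1 (P N).
  case: (boolP (has (fun i => take h.-1 (P i) == take h.-1 (P N)) (iota 1 N.-1))).
    by move/hasP => [i]; rewrite mem_iota => ir /eqP e; exists i; split => //; lia.
  move=> nh; exfalso.
  have h2 : 1 < h.
    rewrite ltn_neqAle h1 andbT; apply/eqP => h1e; move/hasPn: nh => /(_ 1).
    rewrite mem_iota -h1e /= !take0 eqxx /= => H; suff: false by []; apply: H; lia.
  have := labmin h.-1 (ltac:(lia)); move/eqP; apply.
  rewrite /trie_label /= iotaN filter_cat /= eqxx.
  by move: nh; rewrite has_filter negbK => /eqP ->.
have child_of : forall j, 1 <= j <= N -> take h.-1 (P j) = take h.-1 (P N) ->
    trie_child N P (trie_parent v) (h, take h (P j)).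
  move=> j jr e; rewrite /trie_child /trie_node /trie_parent /= !take_takel ?leq_pred //.
  apply/and4P; split.
  - rewrite (leq_trans (leq_pred h) hn) /=; apply/mapP; exists N => //; rewrite mem_iota; lia.
  - by rewrite hn /=; apply/mapP; exists j => //; rewrite mem_iota; lia.
  - by rewrite prednK.
  - by rewrite e.
split.
  exists (h, take h (P i0)); split; first by apply: child_of => //; lia.
  apply/negP => /eqP [e]; have := FN i0 (ltac:(lia)) e; lia.
have szprev : size prev = N.-1 by rewrite size_map size_iota.
have nthprev : forall k, k < N.-1 -> nth [::] prev k = P k.+1.
  by move=> k kN; rewrite (nth_map 0) ?size_iota // nth_iota.
have takeprev : forall k, k <= N.-1 -> take k prev = [seq tval (P i) | i <- iota 1 k].
  by move=> k kN; rewrite -map_take take_iota; congr (map _ (iota _ _)); lia.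
have goodE : forall m, 1 <= m <= N.-1 ->
    all (fun e => e == 0) (drop h (nth [::] Phi m.-1)) =
    ~~ has (fun j => take h (P j) == take h (P m)) (iota 1 m.-1).
  move=> m mr; change (all0 (drop h (nth [::] (cm n prev) m.-1)) = ~~ has (fun j => take h (P j) == take h (P m)) (iota 1 m.-1)).
  rewrite /cm (@cm_nth _ _ n prev m.-1 h) //; last by rewrite szprev; lia.
  rewrite nthprev; last by lia.
  rewrite prednK; last by lia.
  rewrite takeprev; last by lia.
  rewrite sig_le_h // ?has_map.
    case: eqP => //= m1; rewrite m1 /=; done.
  move=> R /mapP [j]; rewrite mem_iota => jr -> e.
  rewrite ltn_neqAle hn andbT; apply/eqP => hne; move: e; rewrite hne.
  rewrite !take_oversize ?size_tuple // => e.
  have := Pinj j m (ltac:(lia)) (ltac:(lia)) (val_inj e); lia.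
have mv : trie_minlab N P v = N by rewrite /trie_minlab labv.
move=> [hw ww] [cw cv lt nb] i1.
move: (cw) => /and4P [_ /andP[w1n /mapP [j0 j0in w2e]] /eqP /= w1 /eqP wpar].
rewrite prednK // in w1; subst hw.
have wp2 : take h.-1 ww = take h.-1 (P N).
  by move: wpar; rewrite /trie_parent /= take_takel ?leq_pred // => [[]].
have pw : has (fun j => take h (P j) == ww) (iota 1 N) by apply/hasP; exists j0; rewrite // (w2e : ww = _) eqxx.
have i1E : i1 = head 0 [seq j <- iota 1 N | take h (P j) == ww] by [].
have := head_filter_mem pw; rewrite -i1E mem_filter mem_iota => /andP[/eqP i1w i1r].
have i1min : forall j, 1 <= j <= N -> take h (P j) = ww -> i1 <= j.
  move=> j jr e; rewrite i1E; apply: head_filter_iota; first by lia.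
  by rewrite e eqxx.
rewrite mv -/i1 in lt.
have i1e : take h.-1 (P i1) = take h.-1 (P N) by rewrite -wp2 -i1w take_takel // leq_pred.
split.
  apply/eqP; rewrite eqn_leq; apply/andP; split.
    apply: sig_ge; first by rewrite h1 hn.
    apply/hasP; exists (tval (P i0)); last by rewrite /= i0e.
    by apply/mapP; exists i0 => //; rewrite mem_iota; lia.
  apply: sig_le => s /andP[s0 sn] /hasP [R /mapP [j jin ->] /eqP e].
  rewrite leqNgt; apply/negP => hs; move: jin; rewrite mem_iota => jr.
  have := FN j (ltac:(lia)); rewrite -(@take_takel _ h s.-1) ?e ?take_takel; [|lia|lia].
  move=> /(_ erefl); lia.
split.
- by apply/andP; split; lia.
- exact: i1e.
- rewrite goodE; last by lia.
  apply/hasPn => j; rewrite mem_iota => jr; apply/negP => /eqP e.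
  have := i1min j (ltac:(lia)); rewrite e i1w => /(_ erefl); lia.
move=> m mr me; rewrite goodE // => /hasPn good.
have cx := child_of m (ltac:(lia)) me.
have mx : trie_minlab N P (h, take h (P m)) = m.
  have pm : has (fun j => take h (P j) == take h (P m)) (iota 1 N).
    by apply/hasP; exists m; rewrite // mem_iota; lia.
  have := head_filter_mem pm; rewrite mem_filter mem_iota => /andP[/eqP e jr].
  rewrite /trie_minlab /trie_label /=.
  apply/eqP; rewrite eqn_leq; apply/andP; split.
    by apply: head_filter_iota; rewrite ?eqxx //; lia.
  rewrite leqNgt; apply/negP => hlt.
  have := good (head 0 [seq j <- iota 1 N | take h (P j) == take h (P m)]).
  by rewrite mem_iota e eqxx /= => H; suff: false by []; apply: H; lia.
have := nb _ cx; rewrite mx mv.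
have -> : m < N by lia.
rewrite andbT; lia.
Qed.
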